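(* Let $\mathcal{M}=\{1,\dots,M\}$ be a set of satellites, $U\ge 1$ an integer, and $w_1,w_2\in[0,1]$ with $w_1+w_2\le 1$. For times $t=1,2,\dots$ let $\phi^*_{i,j,t}\in\{0,1\}$ (with $\phi^*_{i,j,0}\in\{0,1\}$ given) be link-selection variables satisfying $\phi^*_{i,j,t}=\phi^*_{j,i,t}$ and $\sum_{j=1}^M\phi^*_{i,j,t}\le U$ for all $i$. Let $\bar S_{i,j,t}\in[0,1]$ and $\bar L_{i,j,t}\in(0,1]$ be normalized capacity and latency, $\bar\phi_{i,j,t}=\phi^*_{i,j,t}/U$, and $$A_{i,j,t}=w_1\bar S_{i,j,t}+w_2(1-\bar L_{i,j,t})+(1-w_1-w_2)\bar\phi_{i,j,t-1}.$$ Define the score function by $\Pi_{i,0}=0$ for all $i$ and, for $t\ge 1$, $$\Pi_{i,t}=\frac{1}{U}\sum_{j\in\mathcal{M}\setminus\{i\}}\phi^*_{i,j,t}\big(A_{i,j,t}+\Pi_{j,t-1}\big).$$ Then the score function remains finite even as the observation time approaches infinity: $\Pi_{i,t}<\infty$ as $t\to\infty$, for every $i\in\mathcal{M}$.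
   Context: This score function arises in a topology design algorithm for LEO satellite networks, where each satellite $i$ selects at most $U$ other satellites to link with at each time step; $\phi^*_{i,j,t}=1$ means satellites $i$ and $j$ are linked at time $t$. The normalized capacity and latency are $\bar S_{i,j,t}=S_{i,j,t}/S_{\text{Max},t}$ and $\bar L_{i,j,t}=L_{i,j,t}/L_{\text{Max},t}$, where $S_{\text{Max},t},L_{\text{Max},t}$ are the running maxima of capacity and latency over feasible links up to time $t$. *)

(* Defs.v *)
From mathcomp Require Import all_boot all_order all_algebra.
Set Implicit Arguments. Unset Strict Implicit. Unset Printing Implicit Defensive.
Import Order.TTheory GRing.Theory Num.Theory.
Local Open Scope ring_scope.

(* Satellites are indexed by 'I_M (i.e. {1,...,M} shifted to {0,...,M-1}).
   phi i j t : bool is the link-selection variable phi*_{i,j,t} in {0,1}. *)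

Definition Aterm (R : realFieldType) (M U : nat) (w1 w2 : R)
    (phi : 'I_M -> 'I_M -> nat -> bool) (Sbar Lbar : 'I_M -> 'I_M -> nat -> R)
    (i j : 'I_M) (t : nat) : R :=
  w1 * Sbar i j t + w2 * (1 - Lbar i j t)
  + (1 - w1 - w2) * ((phi i j t.-1)%:R / U%:R).

Fixpoint Pi (R : realFieldType) (M U : nat) (w1 w2 : R)
    (phi : 'I_M -> 'I_M -> nat -> bool) (Sbar Lbar : 'I_M -> 'I_M -> nat -> R)
    (t : nat) (i : 'I_M) {struct t} : R :=
  match t with
  | 0 => 0
  | t'.+1 =>
      (U%:R)^-1 * \sum_(j < M | j != i)
        (phi i j t'.+1)%:R * (Aterm U w1 w2 phi Sbar Lbar i j t'.+1
                              + Pi U w1 w2 phi Sbar Lbar t' j)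
  end.

(* Main.v *)
Require Import Defs.
From mathcomp Require Import all_boot all_order all_algebra.
From mathcomp Require Import lra.
Import Order.TTheory GRing.Theory Num.Theory.
Local Open Scope ring_scope.

Theorem lemma2 (R : realFieldType) (M U : nat) (w1 w2 : R)
    (phi : 'I_M -> 'I_M -> nat -> bool) (Sbar Lbar : 'I_M -> 'I_M -> nat -> R)
    (hU : (1 <= U)%N)
    (hw1 : 0 <= w1 <= 1) (hw2 : 0 <= w2 <= 1) (hw : w1 + w2 <= 1)
    (hsym : forall i j t, (0 < t)%N -> phi i j t = phi j i t)
    (hdeg : forall i t, (0 < t)%N -> (\sum_(j < M) (phi i j t : nat) <= U)%N)
    (hS : forall i j t, (0 < t)%N -> 0 <= Sbar i j t <= 1)
    (hL : forall i j t, (0 < t)%N -> 0 < Lbar i j t <= 1) :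
  forall (t : nat) (i : 'I_M),
    0 <= Pi U w1 w2 phi Sbar Lbar t i <= t%:R.
Proof.
have U0 : (0 : R) < U%:R by rewrite ltr0n.
have hA : forall i j t, (0 < t)%N ->
    0 <= Aterm U w1 w2 phi Sbar Lbar i j t <= 1.
  move=> i j t ht; rewrite /Aterm.
  have /andP[s0 s1] := hS i j t ht.
  have /andP[l0 l1] := hL i j t ht.
  move/andP: hw1 => [a0 a1]; move/andP: hw2 => [b0 b1].
  set p := (phi i j t.-1)%:R / U%:R.
  have p0 : 0 <= p by rewrite /p divr_ge0 // ler0n.
  have p1 : p <= 1.
    rewrite /p ler_pdivrMr // mul1r ler_nat.
    by case: (phi i j t.-1).
  have c0 : 0 <= 1 - w1 - w2 by rewrite -addrA -opprD subr_ge0.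
  have f1 : 0 <= w1 * Sbar i j t by rewrite mulr_ge0.
  have f2 : 0 <= w2 * (1 - Lbar i j t) by rewrite mulr_ge0 // subr_ge0.
  have f3 : 0 <= (1 - w1 - w2) * p by rewrite mulr_ge0.
  have e1 : w1 * Sbar i j t <= w1 by rewrite ler_piMr.
  have e2 : w2 * (1 - Lbar i j t) <= w2.
    rewrite ler_piMr // ?subr_ge0 // lerBlDr lerDl; exact: ltW.
  have e3 : (1 - w1 - w2) * p <= 1 - w1 - w2 by rewrite ler_piMr.
  apply/andP; split; lra.
elim=> [|t IH] i /=; first by rewrite lexx.
have hb : forall j : 'I_M, j != i ->
    0 <= (phi i j t.+1)%:R * (Aterm U w1 w2 phi Sbar Lbar i j t.+1
                              + Pi U w1 w2 phi Sbar Lbar t j)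
    <= (phi i j t.+1)%:R * (t.+1)%:R.
  move=> j _.
  have /andP[a0 a1] := hA i j t.+1 isT.
  have /andP[q0 q1] := IH j.
  apply/andP; split; first by apply: mulr_ge0; [rewrite ler0n | exact: addr_ge0].
  apply: ler_wpM2l; first by rewrite ler0n.
  rewrite -natr1; lra.
apply/andP; split.
  rewrite mulr_ge0 ?invr_ge0 ?ler0n // sumr_ge0 // => j /hb /andP[] //.
rewrite ler_pdivrMl //.
apply: (le_trans (ler_sum _ (fun j hj => proj2 (andP (hb j hj))))).
rewrite -mulr_suml.
apply: (@le_trans _ _ ((\sum_(j < M) (phi i j t.+1 : nat))%:R * t.+1%:R)).
  rewrite ler_wpM2r ?ler0n // natr_sum.
  rewrite [X in _ <= X](bigID (fun j => j != i)) /= lerDl.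
  by apply: sumr_ge0 => j _; rewrite ler0n.
by rewrite ler_wpM2r ?ler0n // ler_nat hdeg.
Qed.
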